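(* Let $\mathcal{C}$ be a code and let $m$ be its minimum neuron number. Then $\mathcal{C}$ is isomorphic to a reduced code $\mathcal{D}\subseteq 2^{[m]}$. Moreover this reduced representative is unique up to permutation of neurons: if $\mathcal{D}\subseteq 2^{[m]}$ and $\mathcal{D}'\subseteq 2^{[m']}$ are reduced codes both isomorphic to $\mathcal{C}$, then $m=m'$ and there is a permutation $w$ of $[m]$ with $\mathcal{D}'=\{w(d)\mid d\in\mathcal{D}\}$.
   Context: A code is a subset $\mathcal{C}\subseteq 2^{[n]}$; elements are codewords. For $\sigma\subseteq[n]$, $\mathrm{Tk}_{\mathcal{C}}(\sigma)=\{c\in\mathcal{C}\mid\sigma\subseteq c\}$, and $\mathrm{Tk}_{\mathcal{C}}(i)$ means $\mathrm{Tk}_{\mathcal{C}}(\{i\})$. A trunk in $\mathcal{C}$ is a subset of $\mathcal{C}$ that is empty or equal to $\mathrm{Tk}_{\mathcal{C}}(\sigma)$ for some $\sigma\subseteq[n]$. A function $f:\mathcal{C}\to\mathcal{D}$ between codes is a morphism if preimages of trunks in $\mathcal{D}$ are trunks in $\mathcal{C}$; an isomorphism is a morphism with an inverse function that is a morphism. A neuron $i\in[n]$ is trivial in $\mathcal{C}\subseteq 2^{[n]}$ if $\mathrm{Tk}_{\mathcal{C}}(i)=\emptyset$. A nontrivial neuron $i$ is redundant if there is $\sigma\subseteq[n]$ with $i\notin\sigma$ and $\mathrm{Tk}_{\mathcal{C}}(i)=\mathrm{Tk}_{\mathcal{C}}(\sigma)$. A code $\mathcal{C}\subseteq 2^{[n]}$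 is reduced if no neuron of $[n]$ is trivial or redundant. The minimum neuron number of $\mathcal{C}$ is the smallest $m$ such that $\mathcal{C}$ is isomorphic to a code contained in $2^{[m]}$. *)

(* Defs.v *)
From mathcomp Require Import all_boot.
Set Implicit Arguments. Unset Strict Implicit. Unset Printing Implicit Defensive.

Definition code (n : nat) := {set {set 'I_n}}.

Definition Tk n (C : code n) (sigma : {set 'I_n}) : {set {set 'I_n}} :=
  [set c in C | sigma \subset c].

Definition is_trunk n (C : code n) (T : {set {set 'I_n}}) : Prop :=
  T = set0 \/ exists sigma : {set 'I_n}, T = Tk C sigma.

Definition maps_into n m (C : code n) (D : code m)
    (f : {set 'I_n} -> {set 'I_m}) : Prop :=
  forall c, c \in C -> f c \in D.

Definition preim_code n m (C : code n) (f : {set 'I_n} -> {set 'I_m})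
    (T : {set {set 'I_m}}) : {set {set 'I_n}} :=
  [set c in C | f c \in T].

Definition morphism n m (C : code n) (D : code m)
    (f : {set 'I_n} -> {set 'I_m}) : Prop :=
  maps_into C D f /\
  forall T, is_trunk D T -> is_trunk C (preim_code C f T).

Definition code_iso n m (C : code n) (D : code m) : Prop :=
  exists (f : {set 'I_n} -> {set 'I_m}) (g : {set 'I_m} -> {set 'I_n}),
    [/\ morphism C D f, morphism D C g,
        (forall c, c \in C -> g (f c) = c) &
        (forall d, d \in D -> f (g d) = d)].

Definition trivial_neuron n (C : code n) (i : 'I_n) : Prop :=
  Tk C [set i] = set0.

Definition redundant_neuron n (C : code n) (i : 'I_n) : Prop :=
  ~ trivial_neuron C i /\
  exists sigma : {set 'I_n}, i \notin sigma /\ Tk C [set i] = Tk C sigma.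

Definition reduced n (C : code n) : Prop :=
  forall i : 'I_n, ~ trivial_neuron C i /\ ~ redundant_neuron C i.

Definition min_neuron_number n (C : code n) (m : nat) : Prop :=
  (exists D : code m, code_iso C D) /\
  (forall k, (exists D : code k, code_iso C D) -> m <= k).

(* Main.v *)
Require Import Defs.
From mathcomp Require Import all_boot.
Set Implicit Arguments. Unset Strict Implicit. Unset Printing Implicit Defensive.

Lemma preim_comp n m k (A : code n) (B : code m) (f : {set 'I_n} -> {set 'I_m})
  (h : {set 'I_m} -> {set 'I_k}) T :
  maps_into A B f -> preim_code A (h \o f) T = preim_code A f (preim_code B h T).
Proof.
move=> fAB; apply/setP => x; rewrite /preim_code !inE /=.
by case xA: (x \in A) => //=; rewrite fAB.
Qed.

Lemma morph_comp n m k (A : code n) (B : code m) (E : code k) f h :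
  morphism A B f -> morphism B E h -> morphism A E (h \o f).
Proof.
move=> [fAB fT] [hBE hT]; split.
  by move=> c cA; apply: hBE; apply: fAB.
by move=> T TT; rewrite (preim_comp _ _ fAB); apply: fT; apply: hT.
Qed.

Lemma iso_sym n m (A : code n) (B : code m) : code_iso A B -> code_iso B A.
Proof. by move=> [f [g [? ? ? ?]]]; exists g, f; split. Qed.

Lemma iso_trans n m k (A : code n) (B : code m) (E : code k) :
  code_iso A B -> code_iso B E -> code_iso A E.
Proof.
move=> [f [g [mf mg fg gf]]] [f' [g' [mf' mg' fg' gf']]].
exists (f' \o f), (g \o g'); split.
- exact: morph_comp mf mf'.
- exact: morph_comp mg' mg.
- move=> c cA /=. rewrite fg' ?fg //. by case: mf => H _; apply: H.
- move=> d dE /=. rewrite gf ?gf' //. by case: mg' => H _; apply: H.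
Qed.

Definition del k (i : 'I_k.+1) (c : {set 'I_k.+1}) : {set 'I_k} :=
  [set j | lift i j \in c].

Lemma sub_del k (i : 'I_k.+1) (t : {set 'I_k}) c :
  (t \subset del i c) = (lift i @: t \subset c).
Proof.
apply/subsetP/subsetP => H x.
- by case/imsetP => j jt ->; have := H j jt; rewrite inE.
- by move=> xt; rewrite inE; apply: H; apply: imset_f.
Qed.

Lemma lift_del k (i : 'I_k.+1) c : lift i @: del i c = c :\ i.
Proof.
apply/setP => x; rewrite !inE.
case: (unliftP i x) => [j ->|->].
- rewrite eq_sym neq_lift /= mem_imset; last exact: lift_inj.
  by rewrite inE.
- rewrite eqxx /=; apply/imsetP => [[j _ /eqP]].
  by rewrite (negbTE (neq_lift _ _)).
Qed.

Lemma Tk_setU n (D : code n) A B : Tk D (A :|: B) = Tk D A :&: Tk D B.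
Proof.
apply/setP => c; rewrite /Tk !inE subUset.
by case: (c \in D).
Qed.

Lemma setD1_notin n (s : {set 'I_n}) i : i \notin s -> s :\ i = s.
Proof.
move=> Hi; apply/setP => x; rewrite !inE.
by case: eqP => // ->; rewrite (negbTE Hi).
Qed.

Lemma delete k (D : code k.+1) (i : 'I_k.+1) :
  trivial_neuron D i \/ redundant_neuron D i -> exists D' : code k, code_iso D D'.
Proof.
move=> H.
have [b Hb] : exists b : {set 'I_k} -> bool,
    forall c, c \in D -> (i \in c) = b (del i c).
  case: H => [Ht|[_ [s [si Hs]]]].
    exists (fun _ => false) => c cD; apply/negbTE/negP => ic.
    have : c \in Tk D [set i] by rewrite /Tk inE cD sub1set.
    by rewrite Ht inE.
  exists (fun d : {set 'I_k} => s \subset lift i @: d) => c cD.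
  rewrite lift_del subsetD1 si andbT.
  by move/setP: Hs => /(_ c); rewrite /Tk !inE cD /= sub1set.
have dich : forall s, Tk D s = set0 \/ exists s' : {set 'I_k.+1}, i \notin s' /\ Tk D s = Tk D s'.
  move=> s; case si: (i \in s); last by right; exists s; rewrite si.
  case: H => [Ht|[_ [t [ti Ht]]]].
    left; rewrite -(setD1K si) Tk_setU Ht; exact: set0I.
  right; exists (s :\ i :|: t); split.
    by rewrite !inE eqxx /= ti.
  by rewrite -{1}(setD1K si) !Tk_setU Ht setIC.
pose g (d : {set 'I_k}) := lift i @: d :|: (if b d then [set i] else set0).
have gf : forall c, c \in D -> g (del i c) = c.
  move=> c cD; rewrite /g -Hb // lift_del.
  case: ifP => ic.
    by rewrite setUC setD1K.
  by rewrite setU0 setD1_notin ?ic.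
have fg : forall d, del i (g d) = d.
  move=> d; apply/setP => j; rewrite !inE mem_imset; last exact: lift_inj.
  case: ifP => _; last by rewrite inE orbF.
  by rewrite inE eq_sym (negbTE (neq_lift _ _)) orbF.
exists (del i @: D), (del i), g; split.
- split; first by move=> c cD; apply: imset_f.
  move=> T [->|[t ->]].
    by left; apply/setP => c; rewrite /preim_code !inE andbF.
  right; exists (lift i @: t); apply/setP => c.
  rewrite /preim_code /Tk !inE; case cD: (c \in D) => //=.
  by rewrite imset_f //= sub_del.
- split.
    by move=> d /imsetP [c cD ->]; rewrite gf.
  move=> T [->|[s ->]].
    by left; apply/setP => c; rewrite /preim_code !inE andbF.
  case: (dich s) => [->|[s' [si ->]]].
    by left; apply/setP => c; rewrite /preim_code !inE andbF.
  right; exists (del i s'); apply/setP => d.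
  rewrite /preim_code /Tk !inE; case dD: (d \in del i @: D) => //=.
  case/imsetP: dD => c cD ->; rewrite gf // cD /= sub_del lift_del.
  by rewrite setD1_notin.
- by move=> c cD; rewrite gf.
- by move=> d _; rewrite fg.
Qed.

Lemma nontriv n (D : code n) i : reduced D -> exists c, c \in Tk D [set i].
Proof.
move=> /(_ i) [nt _].
case: (set_0Vmem (Tk D [set i])) => [H|[c Hc]]; [by [] | by exists c].
Qed.

Lemma trunk_ne n (D : code n) X x : is_trunk D X -> x \in X -> exists s, X = Tk D s.
Proof. by case=> [->|//]; rewrite inE. Qed.

Lemma tk_inj n (D : code n) a b : reduced D -> Tk D [set a] = Tk D [set b] -> a = b.
Proof.
move=> rD E; apply/eqP; apply/negPn/negP => ab.
have [nt nr] := rD a; apply: nr; split => //; exists [set b]; split => //.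
by rewrite inE.
Qed.

Lemma key n m (D : code n) (D' : code m) f g :
  reduced D -> reduced D' -> morphism D D' f -> morphism D' D g ->
  (forall c, c \in D -> g (f c) = c) -> (forall d, d \in D' -> f (g d) = d) ->
  forall j : 'I_m, exists i : 'I_n, preim_code D f (Tk D' [set j]) == Tk D [set i].
Proof.
move=> rD rD' [fD fT] [gD gT] gf fg j.
have [s Hs] : exists s, preim_code D f (Tk D' [set j]) = Tk D s.
  have [d dj] := nontriv j rD'.
  apply: (@trunk_ne _ _ _ (g d)); first by apply: fT; right; exists [set j].
  move: dj; rewrite /preim_code /Tk !inE => /andP [dD' jd].
  by rewrite gD //= fg // dD'.
have tau i : exists t, preim_code D' g (Tk D [set i]) = Tk D' t.
  have [c ci] := nontriv i rD.
  apply: (@trunk_ne _ _ _ (f c)); first by apply: gT; right; exists [set i].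
  move: ci; rewrite /preim_code /Tk !inE => /andP [cD ic].
  by rewrite fD //= gf // cD.
pose t i := odflt set0 [pick t | preim_code D' g (Tk D [set i]) == Tk D' t].
have Ht i : preim_code D' g (Tk D [set i]) = Tk D' (t i).
  rewrite /t; case: pickP => [x /eqP //|H].
  by have [x Hx] := tau i; have := H x; rewrite Hx eqxx.
have h1 : forall d, d \in D' -> ([set j] \subset d) = (s \subset g d).
  move=> d dD'; move/setP: Hs => /(_ (g d)).
  by rewrite /preim_code /Tk !inE gD // fg // dD'.
have h2 : forall d i, d \in D' -> (i \in g d) = (t i \subset d).
  move=> d i dD'; move/setP: (Ht i) => /(_ d).
  by rewrite /preim_code /Tk !inE gD // dD' sub1set.
have E : Tk D' [set j] = Tk D' (\bigcup_(i in s) t i).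
  apply/setP => d; rewrite /Tk !inE; case dD': (d \in D') => //=.
  rewrite h1 //; apply/subsetP/bigcupsP => [H i iS|H i iS].
    by rewrite -h2 //; exact: H.
  by rewrite h2 //; exact: H.
have : j \in \bigcup_(i in s) t i.
  apply/negPn/negP => jn; have [nt nr] := rD' j; apply: nr; split => //.
  by exists (\bigcup_(i in s) t i).
case/bigcupP => i iS jt; exists i; apply/eqP; apply/setP => c; rewrite Hs.
rewrite /Tk !inE; case cD: (c \in D) => //=; rewrite sub1set.
apply/idP/idP => [/subsetP/(_ i iS) //|ic].
move/setP: Hs => /(_ c); rewrite /preim_code /Tk !inE cD fD //= sub1set => <-.
have := h2 (f c) i (fD c cD); rewrite gf // ic => /esym/subsetP; apply.
exact: jt.
Qed.

Theorem theorem1p2 (n : nat) (C : code n) (m : nat) :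
  min_neuron_number C m ->
  (exists D : code m, reduced D /\ code_iso C D) /\
  (forall (m' : nat) (D : code m) (D' : code m'),
     reduced D -> code_iso C D -> reduced D' -> code_iso C D' ->
     m = m' /\
     exists w : 'I_m -> 'I_m',
       bijective w /\ D' = [set w @: d | d : {set 'I_m} in D]).
Proof.
move=> [[D0 iso0] minm]; split.
  exists D0; split => // i.
  have nd : ~ (trivial_neuron D0 i \/ redundant_neuron D0 i).
    move=> Hi; revert D0 iso0 i Hi.
    case: m minm => [|k] minm D0 iso0 i Hi; first by have := ltn_ord i; rewrite ltn0.
    have [D' isoD'] := delete Hi.
    have := minm k (ex_intro _ D' (iso_trans iso0 isoD')).
    by rewrite ltnn.
  by split => H; apply: nd; [left|right].
move=> m' D D' rD isoD rD' isoD'.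
have [f [g [mf mg gf fg]]] := iso_trans (iso_sym isoD) isoD'.
have K1 := key rD rD' mf mg gf fg.
have K2 := key rD' rD mg mf fg gf.
pose phi j := xchoose (K1 j).
pose psi i := xchoose (K2 i).
have Hphi j : preim_code D f (Tk D' [set j]) = Tk D [set phi j].
  exact/eqP/(xchooseP (K1 j)).
have Hpsi i : preim_code D' g (Tk D [set i]) = Tk D' [set psi i].
  exact/eqP/(xchooseP (K2 i)).
case: mf => fD _; case: mg => gD _.
have c1 : cancel phi psi.
  move=> j; apply: (tk_inj rD'); rewrite -Hpsi.
  apply/setP => d; rewrite /preim_code /Tk !inE.
  case dD': (d \in D') => //=; rewrite gD //=.
  move/setP: (Hphi j) => /(_ (g d)).
  by rewrite /preim_code /Tk !inE gD // fg // dD'.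
have c2 : cancel psi phi.
  move=> i; apply: (tk_inj rD); rewrite -Hphi.
  apply/setP => c; rewrite /preim_code /Tk !inE.
  case cD: (c \in D) => //=; rewrite fD //=.
  move/setP: (Hpsi i) => /(_ (f c)).
  by rewrite /preim_code /Tk !inE fD // gf // cD.
split.
  apply/eqP; rewrite eqn_leq.
  have := leq_card _ (can_inj c2); have := leq_card _ (can_inj c1).
  by rewrite !card_ord => -> ->.
exists psi; split; first by exists phi.
have fc : forall c, c \in D -> f c = psi @: c.
  move=> c cD; rewrite (can2_imset_pre _ c2 c1); apply/setP => j; rewrite !inE.
  move/setP: (Hphi j) => /(_ c).
  by rewrite /preim_code /Tk !inE cD fD //= !sub1set.
apply/setP => d; apply/idP/imsetP.
  by move=> dD'; exists (g d); [apply: gD | rewrite -fc ?fg //; apply: gD].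
by case=> c cD ->; rewrite -fc //; apply: fD.
Qed.
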